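(* Let $A,B,C\in\widehat{\mathbb F_q^\times}$ with $A\neq\varepsilon$, $B\ne\varepsilon$, $A\neq C$, $B\neq C$, and let $\lambda\in\mathbb F_q^\times$. Then $$2\,{}_2\mathbb P_1\!\left[\begin{matrix}A&B\\&C\end{matrix};\lambda\right]=ABC(-1)\overline A(\lambda)\,{}_2\mathbb P_1\!\left[\begin{matrix}A&A\overline C\\&A\overline B\end{matrix};\tfrac1\lambda\right]+ABC(-1)\overline B(\lambda)\frac{J(B,\overline BC)}{J(A,\overline AC)}\,{}_2\mathbb P_1\!\left[\begin{matrix}B&B\overline C\\&B\overline A\end{matrix};\tfrac1\lambda\right],$$ and $$2\,{}_2\mathbb F_1\!\left[\begin{matrix}A&B\\&C\end{matrix};\lambda\right]=ABC(-1)\overline A(\lambda)\frac{J(\overline CA,\overline BC)}{J(B,C\overline B)}\,{}_2\mathbb F_1\!\left[\begin{matrix}A&A\overline C\\&A\overline B\end{matrix};\tfrac1\lambda\right]+ABC(-1)\overline B(\lambda)\frac{J(C\overline A,\overline CB)}{J(A,\overline AC)}\,{}_2\mathbb F_1\!\left[\begin{matrix}B&B\overline C\\&B\overline A\end{matrix};\tfrac1\lambda\right].$$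
   Context: $\mathbb F_q$ is a finite field with $q$ elements, $q$ a power of an odd prime $p$. $\widehat{\mathbb F_q^\times}$ is the group of multiplicative characters $\chi:\mathbb F_q^\times\to\mathbb C^\times$; every character, including the trivial character $\varepsilon$, is extended to $\mathbb F_q$ by $\chi(0)=0$. $\overline\chi$ denotes the complex-conjugate (inverse) character, and products of characters are pointwise (e.g. $\overline AC(x)=\overline A(x)C(x)$). Jacobi sum: $J(A,B)=\sum_{x\in\mathbb F_q}A(x)B(1-x)$. Period function: ${}_2\mathbb P_1\!\left[\begin{matrix}A&B\\&C\end{matrix};\lambda\right]=\sum_{y\in\mathbb F_q}B(y)\,\overline BC(1-y)\,\overline A(1-\lambda y)$; normalized function ${}_2\mathbb F_1\!\left[\begin{matrix}A&B\\&C\end{matrix};\lambda\right]=\frac{1}{J(B,C\overline B)}\,{}_2\mathbb P_1\!\left[\begin{matrix}A&B\\&C\end{matrix};\lambda\right]$. *)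

(* Defs.v *)
From HB Require Import structures.
From mathcomp Require Import all_boot all_order all_algebra all_field.
Set Implicit Arguments. Unset Strict Implicit. Unset Printing Implicit Defensive.
Import Order.TTheory GRing.Theory Num.Theory.
Local Open Scope ring_scope.

(* A multiplicative character of F_q^x, with values in C (algC), extended by chi(0)=0. *)
Definition is_mchar (F : finFieldType) (chi : F -> algC) : Prop :=
  [/\ chi 0 = 0, chi 1 = 1 & forall x y : F, chi (x * y) = chi x * chi y].

Definition eps (F : finFieldType) : F -> algC := fun x => if x == 0 then 0 else 1.

(* pointwise product and complex conjugate (= inverse) of characters *)
Definition cmul (F : finFieldType) (A B : F -> algC) : F -> algC := fun x => A x * B x.
Definition cconj (F : finFieldType) (A : F -> algC) : F -> algC := fun x => (A x)^*.

Definition jacobi (F : finFieldType) (A B : F -> algC) : algC :=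
  \sum_(x : F) A x * B (1 - x).

Definition P21 (F : finFieldType) (A B C : F -> algC) (lam : F) : algC :=
  \sum_(y : F) B y * cmul (cconj B) C (1 - y) * cconj A (1 - lam * y).

Definition F21 (F : finFieldType) (A B C : F -> algC) (lam : F) : algC :=
  P21 A B C lam / jacobi B (cmul C (cconj B)).

(* Main.v *)
Require Import Defs.
From HB Require Import structures.
From mathcomp Require Import all_boot all_order all_algebra all_field.
From mathcomp Require Import ring.
From Stdlib Require Import FunctionalExtensionality.
Import Order.TTheory GRing.Theory Num.Theory.
Set Implicit Arguments. Unset Strict Implicit.
Local Open Scope ring_scope.

Section Chars.
Variable F : finFieldType.
Implicit Types (X Y : F -> algC).

Lemma mch_neq0 X (x : F) : is_mchar X -> x != 0 -> X x != 0.
Proof.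
case=> X0 X1 XM nz; apply/eqP=> e.
have := XM x x^-1; rewrite mulfV // X1 e mul0r => /eqP; by rewrite oner_eq0.
Qed.

Lemma mch_inv X (x : F) : is_mchar X -> X x^-1 = (X x)^-1.
Proof.
move=> hX; have [X0 X1 XM] := hX.
have [->|nz] := eqVneq x 0; first by rewrite invr0 X0 invr0.
apply: (mulfI (mch_neq0 hX nz)); rewrite -XM mulfV // mulfV //.
exact: mch_neq0.
Qed.

Lemma mch_conj X (x : F) : is_mchar X -> (X x)^* = X x^-1.
Proof.
move=> hX; have [X0 X1 XM] := hX.
have [->|nz] := eqVneq x 0; first by rewrite invr0 X0 conjC0.
have Xn : forall n, X (x ^+ n) = X x ^+ n.
  by elim=> [|n IH]; rewrite ?expr0 // !exprS XM IH.
have hpos : (0 < #|F|.-1)%N by rewrite -subn1 subn_gt0 finNzRing_gt1.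
have e1 : X x ^+ #|F|.-1 = 1.
  rewrite -Xn; suff -> : x ^+ #|F|.-1 = 1 by [].
  apply: (mulfI nz); rewrite -exprS prednK; [by rewrite expf_card mulr1|exact: ltnW (finNzRing_gt1 _)].
have n1 : `|X x| = 1.
  apply/eqP; rewrite -(pexpr_eq1 hpos) ?normr_ge0 // -normrX e1 normr1 //.
rewrite mch_inv //; apply: (mulfI (mch_neq0 hX nz)).
by rewrite -normCK n1 expr1n mulfV // mch_neq0.
Qed.

Lemma mch_sum X : is_mchar X -> (\sum_x X x = 0) \/ (forall x, X x = eps x).
Proof.
move=> hX; have [X0 X1 XM] := hX.
case: (boolP [exists a, (a != 0) && (X a != 1)]).
  case/existsP=> a /andP[anz Xa1]; left.
  have e : \sum_x X x = X a * \sum_x X x.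
    rewrite mulr_sumr (reindex_inj (mulfI anz)) /=.
    by apply: eq_bigr => y _; rewrite XM.
  apply/eqP; move: e => /eqP; rewrite -subr_eq0 -{1}[\sum_x X x]mul1r -mulrBl.
  by rewrite mulf_eq0 subr_eq0 eq_sym (negbTE Xa1).
rewrite negb_exists => /forallP H; right => x; rewrite /eps.
case: eqP => [->|/eqP nz] //; move: (H x); rewrite nz /= negbK => /eqP //.
Qed.

Lemma mch_sum_ne X : is_mchar X -> X <> @eps F -> \sum_x X x = 0.
Proof.
move=> hX ne; case: (mch_sum hX) => // H; exfalso; apply: ne.
exact: functional_extensionality.
Qed.

Lemma mch_cconj X : is_mchar X -> is_mchar (cconj X).
Proof.
case=> X0 X1 XM; split; rewrite /cconj ?X0 ?X1 ?conjC0 ?conjC1 //.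
by move=> x y; rewrite XM rmorphM.
Qed.

Lemma mch_cmul X Y : is_mchar X -> is_mchar Y -> is_mchar (cmul X Y).
Proof.
case=> X0 X1 XM [Y0 Y1 YM]; split; rewrite /cmul ?X0 ?X1 ?Y1 ?mul0r ?mulr1 //.
by move=> x y; rewrite XM YM; ring.
Qed.

Lemma sum_eps1 : \sum_x (@eps F x) + 1 != 0.
Proof.
have -> : \sum_x (@eps F x) + 1 = \sum_(x : F) 1.
  rewrite (bigD1 (0:F)) //= [X in _ = X](bigD1 (0:F)) //= /eps eqxx add0r addrC.
  by congr (_ + _); apply: eq_bigr => x /negbTE ->.
by rewrite sumr_const pnatr_eq0 -lt0n; exact: ltnW (finNzRing_gt1 _).
Qed.

Lemma mch_ne_conj X Y : is_mchar X -> is_mchar Y -> X <> Y ->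
  cmul (cconj X) Y <> @eps F.
Proof.
move=> hX hY ne e; apply: ne; apply: functional_extensionality => x.
have [X0 X1 XM] := hX; have [Y0 Y1 YM] := hY.
have [->|nz] := eqVneq x 0; first by rewrite X0 Y0.
have := congr1 (fun f => f x) e; rewrite /cmul /cconj /eps (negbTE nz) mch_conj //.
rewrite mch_inv // => h; have := mch_neq0 hX nz => nX.
by apply: (mulfI (invr_neq0 nX)); rewrite h mulVf.
Qed.

End Chars.

Section Jac.
Variable F : finFieldType.
Implicit Types (X Y : F -> algC).

Lemma inj_subl (c : F) : injective (fun y : F => c - y).
Proof. by move=> y z /addrI /oppr_inj. Qed.

Lemma inj_mob (u c : F) : c != 0 -> injective (fun y : F => u + c * (1 - y)^-1).
Proof. by move=> cnz y z /addrI /(mulfI cnz) /invr_inj /inj_subl. Qed.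

Lemma jac_step3 Y (u : F) : is_mchar Y -> \sum_x Y x = 0 ->
  \sum_y Y (1 - u * y) * Y (1 - y)^-1 =
    if u == 1 then \sum_x (@eps F x) else - Y u.
Proof.
move=> hY S0; have [Y0 Y1 YM] := hY.
case: eqP => [->|/eqP u1].
  rewrite (reindex_inj (@inj_subl 1)) /=; apply: eq_bigr => y _.
  rewrite mul1r (_ : 1 - (1 - y) = y); last by ring.
  rewrite /eps; case: eqP => [->|/eqP nz]; first by rewrite Y0 mul0r.
  by rewrite mch_inv // mulfV // mch_neq0.
have cnz : 1 - u != 0 by rewrite subr_eq0 eq_sym.
set f := fun y : F => u + (1 - u) * (1 - y)^-1.
have Sf : \sum_y Y (f y) = 0.
  by rewrite -[RHS]S0 [RHS](reindex_inj (@inj_mob u _ cnz)).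
rewrite (bigD1 1) //= subrr invr0 Y0 mulr0 add0r.
move: Sf; rewrite (bigD1 1) //= /f subrr invr0 mulr0 addr0 => /eqP.
rewrite addrC addr_eq0 => /eqP <-; apply: eq_bigr => y y1.
rewrite -YM; congr (Y _); rewrite /f; field.
by rewrite subr_eq0 eq_sym.
Qed.

Lemma jac_nz X Y : is_mchar X -> is_mchar Y -> \sum_x X x = 0 -> \sum_x Y x = 0 ->
  jacobi X Y != 0.
Proof.
move=> hX hY SX SY; have [X0 X1 XM] := hX; have [Y0 Y1 YM] := hY.
have key : jacobi X Y * (jacobi X Y)^* =
    \sum_x (@eps F x) + 1 - \sum_u X u * Y u.
  rewrite /jacobi rmorph_sum /= big_distrlr /=.
  rewrite exchange_big /=.
  transitivity (\sum_u X u * (\sum_y Y (1 - u * y) * Y (1 - y)^-1)).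
    under [RHS]eq_bigr => u _ do rewrite mulr_sumr.
    rewrite [RHS]exchange_big /=; apply: eq_bigr => y _.
    have [->|ynz] := eqVneq y 0.
      rewrite X0 mul0r conjC0 big1 => [|x _]; last by rewrite mulr0.
      by under eq_bigr => u _ do rewrite mulr0 subr0 invr1 Y1 !mulr1; rewrite SX.
    rewrite (reindex_inj (mulIf ynz)) /=; apply: eq_bigr => u _.
    rewrite rmorphM /= !mch_conj // XM mch_inv //; field.
    exact: mch_neq0.
  transitivity (\sum_u X u * (if u == 1 then \sum_x (@eps F x) else - Y u)).
    by apply: eq_bigr => u _; rewrite jac_step3.
  rewrite (bigD1 (1:F)) //= eqxx X1 mul1r [X in _ - X](bigD1 (1:F)) //= X1 Y1 mulr1.
  rewrite opprD addrA addrK -sumrN; congr (_ + _); apply: eq_bigr => u /negbTE ->.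
  by rewrite mulrN.
case: (mch_sum (mch_cmul hX hY)) => H.
  apply/negP => /eqP J0; move: key; rewrite J0 mul0r H subr0 => /esym/eqP.
  by rewrite (negbTE (sum_eps1 _)).
apply/negP => /eqP J0; move: key; rewrite J0 mul0r.
rewrite (eq_bigr _ (fun u _ => H u)) addrC addKr => /esym/eqP.
by rewrite oner_eq0.
Qed.

Lemma jacC X Y : jacobi X Y = jacobi Y X.
Proof.
rewrite /jacobi (reindex_inj (@inj_subl 1)) /=; apply: eq_bigr => x _.
by rewrite mulrC (_ : 1 - (1 - x) = x) //; ring.
Qed.

End Jac.

Section T1.
Variable F : finFieldType.
Implicit Types (X Y : F -> algC).

Lemma T1 A B C (lam : F) : is_mchar A -> is_mchar B -> is_mchar C -> lam != 0 ->
  P21 A B C lam = A (-1) * B (-1) * C (-1) * cconj A lam *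
     P21 A (cmul A (cconj C)) (cmul A (cconj B)) lam^-1.
Proof.
move=> hA hB hC lnz.
have [A0 A1 AM] := hA; have [B0 B1 BM] := hB; have [C0 C1 CM] := hC.
rewrite /P21 mulr_sumr [RHS](reindex_inj invr_inj) /=; apply: eq_bigr => y _.
rewrite /cmul /cconj !rmorphM /= !conjCK !mch_conj // !invrK.
have [->|ynz] := eqVneq y 0; first by rewrite invr0 A0 B0 !(mul0r, mulr0).
have [->|y1] := eqVneq y 1; first by rewrite subrr invr0 B0 invr1 subrr A0 !(mul0r, mulr0).
have [ly|ly1] := eqVneq (lam * y) 1.
  have -> : 1 - lam^-1 / y = 0 by rewrite -invfM ly invr1 subrr.
  by rewrite ly subrr invr0 A0 !(mul0r, mulr0).
have eA : A (1 - lam * y)^-1 =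
   A (-1 * lam^-1 * y^-1 * (1 - y^-1)^-1 * (1 - y^-1) * (1 - lam^-1 / y)^-1).
    by congr (A _); field; rewrite ?subr_eq0 ?(eq_sym 1) ?ynz ?lnz ?ly1 ?y1.
have eB : B y * B (1 - y)^-1 = B (-1 * (1 - y^-1)^-1).
  by rewrite -BM; congr (B _); field; rewrite ?subr_eq0 ?(eq_sym 1) ?ynz ?lnz ?ly1 ?y1.
have eC : C (1 - y) = C (-1 * y * (1 - y^-1)).
  by congr (C _); field; rewrite ?subr_eq0 ?(eq_sym 1) ?ynz ?lnz ?ly1 ?y1.
rewrite mulrA eB eC eA !AM !BM !CM; ring.
Qed.
End T1.

Section Sym.
Variable F : finFieldType.
Implicit Types (X Y : F -> algC).

Lemma inj_h (k : F) : k != 0 -> injective (fun s : F => 1 - (1 + k * s)^-1).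
Proof. by move=> knz a b /inj_subl /invr_inj /addrI /(mulfI knz). Qed.

Lemma FG A B C (lam : F) : is_mchar A -> is_mchar B -> is_mchar C ->
  \sum_x A x = 0 -> \sum_x (C x)^* * A x = 0 ->
  jacobi A (cmul (cconj A) C) * P21 A B C lam =
  \sum_r \sum_s A s * B r * C (1 + r + s + (1 - lam) * r * s)^-1.
Proof.
move=> hA hB hC SA SCA.
have [A0 A1 AM] := hA; have [B0 B1 BM] := hB; have [C0 C1 CM] := hC.
rewrite /jacobi /P21 big_distrlr /= exchange_big /=.
rewrite (reindex_inj (@inj_h 1 (oner_neq0 _))) /=; apply: eq_bigr => r _.
rewrite /cmul /cconj !mch_conj // mul1r.
have [->|r1] := eqVneq r (-1).
  rewrite subrr invr0 subr0 subrr C0 big1 => [|x _]; last by rewrite !(mul0r, mulr0).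
  symmetry; transitivity (B (-1) * C lam^-1 * \sum_s C s^-1 * A s).
    rewrite mulr_sumr; apply: eq_bigr => s _.
    rewrite (_ : 0 + s + (1 - lam) * -1 * s = lam * s); last by ring.
    by rewrite invfM CM; ring.
  rewrite (eq_bigr (fun s => (C s)^* * A s)) ?SCA ?mulr0 // => s _.
  by rewrite mch_conj.
have r1' : 1 + r != 0 by rewrite addrC addr_eq0.
have ey : 1 - lam * (1 - (1 + r)^-1) = (1 + (1 - lam) * r) / (1 + r) by field.
have [m0|mnz] := eqVneq (1 + (1 - lam) * r) 0.
  rewrite ey m0 mul0r invr0 A0 big1 => [|x _]; last by rewrite !mulr0.
  symmetry; transitivity ((\sum_s A s) * B r * C (1 + r)^-1); last first.
    by rewrite SA !mul0r.
  rewrite !mulr_suml; apply: eq_bigr => s _.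
  rewrite (_ : 1 + r + s + (1 - lam) * r * s = 1 + r + s * (1 + (1 - lam) * r)).
    by rewrite m0 mulr0 addr0.
  by ring.
set k := (1 + (1 - lam) * r) / (1 + r).
have knz : k != 0 by rewrite mulf_eq0 negb_or mnz invr_eq0.
rewrite (reindex_inj (inj_h knz)) /=; apply: eq_bigr => s _.
have sub1K : forall z : F, 1 - (1 - z) = z by move=> z; ring.
rewrite mch_conj // !sub1K !invrK ey.
have [->|snz] := eqVneq s 0.
  by rewrite mulr0 addr0 invr1 subrr A0 !mul0r.
have [ks0|ksnz] := eqVneq (1 + k * s) 0.
  have -> : 1 + r + s + (1 - lam) * r * s = (1 + r) * (1 + k * s) by rewrite /k; field.
  by rewrite ks0 mulr0 !invr0 C0 !(mulr0, mul0r).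
have hks : 1 + r + (1 + (1 - lam) * r) * s != 0.
  rewrite (_ : _ + _ * _ = (1 + r) * (1 + k * s)); first by rewrite mulf_neq0.
  by rewrite /k; field.
have eA : A (1 - (1 + k * s)^-1) * A (1 + k * s) * A ((1 + (1 - lam) * r) / (1 + r))^-1 = A s.
    by rewrite -!AM; congr (A _); rewrite /k; field; rewrite r1' mnz hks.
have eB : B (1 - (1 + r)^-1) * B (1 + r) = B r.
  by rewrite -BM; congr (B _); field.
have eC : C (1 + k * s)^-1 * C (1 + r)^-1 = C (1 + r + s + (1 - lam) * r * s)^-1.
  rewrite -CM; congr (C _); rewrite /k; field; rewrite r1' andbT.
  by rewrite (_ : _ + _ = 1 + r + (1 + (1 - lam) * r) * s) //; ring.
by rewrite -eA -eB -eC; ring.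
Qed.

Lemma Sym A B C (lam : F) : is_mchar A -> is_mchar B -> is_mchar C ->
  \sum_x A x = 0 -> \sum_x (C x)^* * A x = 0 ->
  \sum_x B x = 0 -> \sum_x (C x)^* * B x = 0 ->
  jacobi A (cmul (cconj A) C) * P21 A B C lam =
  jacobi B (cmul (cconj B) C) * P21 B A C lam.
Proof.
move=> hA hB hC SA SCA SB SCB; rewrite !FG //.
rewrite exchange_big; apply: eq_bigr => r _; apply: eq_bigr => s _.
rewrite (_ : 1 + s + r + (1 - lam) * s * r = 1 + r + s + (1 - lam) * r * s); last by ring.
by ring.
Qed.

Lemma cmulC X Y : cmul X Y = cmul Y X.
Proof. by apply: functional_extensionality => x; rewrite /cmul mulrC. Qed.

Lemma fun_eq1 X Y Z : is_mchar X -> is_mchar Y -> is_mchar Z ->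
  cmul (cmul X (cconj Y)) (cconj (cmul X (cconj Z))) = cmul (cconj Y) Z.
Proof.
move=> hX hY hZ; apply: functional_extensionality => x.
have [X0 X1 XM] := hX; have [Y0 Y1 YM] := hY; have [Z0 Z1 ZM] := hZ.
rewrite /cmul /cconj rmorphM /= conjCK.
have [->|nz] := eqVneq x 0; first by rewrite X0 Z0 !(mul0r, mulr0).
by rewrite !mch_conj // !mch_inv //; field; rewrite !mch_neq0.
Qed.

End Sym.
Unset Implicit Arguments. Set Strict Implicit.
Theorem mainTheorem4 (F : finFieldType) (A B C : F -> algC) (lam : F) :
  (2 \notin [pchar F])%N ->
  is_mchar A -> is_mchar B -> is_mchar C ->
  A <> @eps F -> B <> @eps F -> A <> C -> B <> C ->
  lam != 0 ->
  let s := A (-1) * B (-1) * C (-1) in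
  2 * P21 A B C lam =
    s * cconj A lam * P21 A (cmul A (cconj C)) (cmul A (cconj B)) lam^-1
    + s * cconj B lam * (jacobi B (cmul (cconj B) C) / jacobi A (cmul (cconj A) C))
        * P21 B (cmul B (cconj C)) (cmul B (cconj A)) lam^-1
  /\
  2 * F21 A B C lam =
    s * cconj A lam * (jacobi (cmul (cconj C) A) (cmul (cconj B) C)
                       / jacobi B (cmul C (cconj B)))
      * F21 A (cmul A (cconj C)) (cmul A (cconj B)) lam^-1
    + s * cconj B lam * (jacobi (cmul C (cconj A)) (cmul (cconj C) B)
                       / jacobi A (cmul (cconj A) C))
      * F21 B (cmul B (cconj C)) (cmul B (cconj A)) lam^-1.
Proof.
move=> _ hA hB hC nA nB nAC nBC lnz s.
have SA := mch_sum_ne hA nA; have SB := mch_sum_ne hB nB.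
have SCA : \sum_x (C x)^* * A x = 0.
  exact: (mch_sum_ne (mch_cmul (mch_cconj hC) hA) (mch_ne_conj hC hA (nesym nAC))).
have SCB : \sum_x (C x)^* * B x = 0.
  exact: (mch_sum_ne (mch_cmul (mch_cconj hC) hB) (mch_ne_conj hC hB (nesym nBC))).
have SAC := mch_sum_ne (mch_cmul (mch_cconj hA) hC) (mch_ne_conj hA hC nAC).
have SBC := mch_sum_ne (mch_cmul (mch_cconj hB) hC) (mch_ne_conj hB hC nBC).
have JAnz := jac_nz hA (mch_cmul (mch_cconj hA) hC) SA SAC.
have JBnz := jac_nz hB (mch_cmul (mch_cconj hB) hC) SB SBC.
have K1nz := jac_nz (mch_cmul (mch_cconj hC) hA) (mch_cmul (mch_cconj hB) hC) SCA SBC.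
have K2nz : jacobi (cmul C (cconj A)) (cmul (cconj C) B) != 0.
  by rewrite (cmulC C); exact: jac_nz (mch_cmul (mch_cconj hA) hC) (mch_cmul (mch_cconj hC) hB) SAC SCB.
have hSym := Sym lam hA hB hC SA SCA SB SCB.
have T1A := T1 hA hB hC lnz.
have T1B := T1 hB hA hC lnz.
set PA := P21 A B C lam in hSym T1A *.
set PB := P21 B A C lam in hSym T1B *.
set PA' := P21 A (cmul A (cconj C)) (cmul A (cconj B)) lam^-1 in T1A *.
set PB' := P21 B (cmul B (cconj C)) (cmul B (cconj A)) lam^-1 in T1B *.
set JA := jacobi A (cmul (cconj A) C) in JAnz hSym *.
set JB := jacobi B (cmul (cconj B) C) in JBnz hSym *.
have ePB : PB = JA * PA / JB by apply: (mulfI JBnz); rewrite -hSym; field.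
have t1 : s * cconj A lam * PA' = PA by rewrite T1A.
have t2 : s * cconj B lam * PB' = PB by rewrite T1B /s; ring.
split.
  rewrite t1 (_ : s * cconj B lam * (JB / JA) * PB' = JB / JA * (s * cconj B lam * PB'));
    last by ring.
  by rewrite t2 ePB; field; rewrite ?JAnz ?JBnz.
rewrite /F21 -/PA -/PA' -/PB' (cmulC C (cconj B)) -/JB.
rewrite fun_eq1 // fun_eq1 // (cmulC A (cconj C)) (cmulC (cconj A) C) (cmulC B (cconj C)).
rewrite [X in PB' / X]jacC.
transitivity (PA / JB + PB / JA); first by rewrite ePB; field; rewrite ?JAnz ?JBnz.
by rewrite -t1 -t2; field; rewrite ?JAnz ?JBnz ?K1nz ?K2nz.
Qed.
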